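(* In the setting of the noncommutative space $\mathbb{R}^4_\theta$ described in the context, the element $g=\sum_{i,j=1}^4g_{ij}\,\mathrm{d}z^i\otimes_A\mathrm{d}z^j\in\Omega^1_A\otimes_A\Omega^1_A$ defines a (generalized) metric on $\Omega^1_A$ (i.e. it is central and determines an $A$-bimodule map $g:A\to\Omega^1_A\otimes_A\Omega^1_A$, $a\mapsto a\,g$), whose inverse metric is the map $g^{-1}:\Omega^1_A\otimes_A\Omega^1_A\to A$ determined by $g^{-1}(\mathrm{d}z^i\otimes_A\mathrm{d}z^j)=g^{ij}$.
   Context: Let $\theta\in\mathbb{R}$ and $R=(R^{ab})$ the $4\times4$ matrix (row $a$, column $b$) with rows $(1,e^{-i\theta},1,e^{i\theta})$, $(e^{i\theta},1,e^{-i\theta},1)$, $(1,e^{i\theta},1,e^{-i\theta})$, $(e^{-i\theta},1,e^{i\theta},1)$. Let $A=\mathbb{C}\langle z^1,z^2,z^3,z^4\rangle/(z^iz^j-R^{ji}z^jz^i)$. Let $\Omega^1_A=\bigoplus_{i=1}^4A\,\mathrm{d}z^i$ be the free left $A$-module with right $A$-action determined by $\mathrm{d}z^i\,z^j=R^{ji}z^j\,\mathrm{d}z^i$, and $\mathrm{d}:A\to\Omega^1_A$ the map with $z^i\mapsto\mathrm{d}z^i$ extended by the Leibniz rule. Let $P$ be the $4\times4$ matrix with rows $(0,0,1,0),(0,0,0,1),(1,0,0,0),(0,1,0,0)$, $(g_{ij})=\tfrac12P$ and $(g^{ij})=2P$; $g^{-1}$ is extended left $A$-linearly using the left basis $\{\mathrm{d}z^i\otimes_A\mathrm{d}z^j\}$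 of $\Omega^1_A\otimes_A\Omega^1_A$. A (generalized) metric is an $A$-bimodule map $g:A\to\Omega^1_A\otimes_A\Omega^1_A$, $g(1)=\sum_\alpha g^\alpha\otimes_Ag_\alpha$, for which there is an $A$-bimodule map $g^{-1}:\Omega^1_A\otimes_A\Omega^1_A\to A$ with $\sum_\alpha g^{-1}(\omega\otimes_Ag^\alpha)g_\alpha=\omega=\sum_\alpha g^\alpha g^{-1}(g_\alpha\otimes_A\omega)$ for all $\omega\in\Omega^1_A$. *)

(* Defs.v *)
From HB Require Import structures.
From mathcomp Require Import all_boot all_order all_algebra.
From mathcomp Require Import reals trigo.
From mathcomp Require Import complex.
Set Implicit Arguments. Unset Strict Implicit. Unset Printing Implicit Defensive.
Import Order.TTheory GRing.Theory Num.Theory.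
Local Open Scope ring_scope.

(* Data of R^4_theta.  Indices 1..4 of the paper are 0..3 here.       *)

Definition eith (R : realType) (theta : R) : R[i] :=
  (cos theta +i* sin theta)%C.
Definition emith (R : realType) (theta : R) : R[i] :=
  (cos theta +i* (- sin theta))%C.

(* Rmat theta a b = R^{ab} (row a, column b) *)
Definition Rmat (R : realType) (theta : R) : 'M[R[i]]_4 :=
  let e := eith theta in let f := emith theta in
  let rows := [:: [:: 1; f; 1; e];
                  [:: e; 1; f; 1];
                  [:: 1; e; 1; f];
                  [:: f; 1; e; 1]] in
  \matrix_(a < 4, b < 4) nth 0 (nth [::] rows a) b.

Definition Pmat (K : nzRingType) : 'M[K]_4 :=
  let rows := [:: [:: 0; 0; 1; 0];
                  [:: 0; 0; 0; 1];
                  [:: 1; 0; 0; 0];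
                  [:: 0; 1; 0; 0]] in
  \matrix_(a < 4, b < 4) nth 0 (nth [::] rows a) b.

Definition glow (R : realType) : 'M[R[i]]_4 := 2^-1 *: Pmat R[i].
Definition gup (R : realType) : 'M[R[i]]_4 := 2 *: Pmat R[i].

(* The algebra A = C<z1..z4>/(z^i z^j - R^{ji} z^j z^i), characterised *)
(* by its defining presentation.                                        *)

Definition is_alg_hom (K : nzRingType) (A B : lalgType K) (f : A -> B) : Prop :=
  [/\ forall a b, f (a + b) = f a + f b,
      forall (c : K) a, f (c *: a) = c *: f a,
      forall a b, f (a * b) = f a * f b
    & f 1 = 1].

Definition theta_rel (R : realType) (theta : R) (B : lalgType R[i])
  (w : 'I_4 -> B) : Prop :=
  forall i j : 'I_4, w i * w j = Rmat theta j i *: (w j * w i).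

Definition generated_by (K : nzRingType) (A : lalgType K) (z : 'I_4 -> A) : Prop :=
  forall P : A -> Prop,
    (forall i, P (z i)) -> (forall c : K, P (c%:A)) ->
    (forall a b, P a -> P b -> P (a + b)) ->
    (forall a b, P a -> P b -> P (a * b)) ->
    forall a, P a.

Definition presented_Rtheta (R : realType) (theta : R) (A : algType R[i])
  (z : 'I_4 -> A) : Prop :=
  [/\ theta_rel theta z,
      generated_by z
    & forall (B : algType R[i]) (w : 'I_4 -> B), theta_rel theta w ->
        exists f : A -> B, is_alg_hom f /\ forall i, f (z i) = w i].

(* The bimodules Omega^1_A = (+)_i A dz^i and Omega^1 (x)_A Omega^1    *)
(* (free left modules).  The right action is encoded by the algebra    *)
(* endomorphisms sigma_i with dz^i b = sigma_i(b) dz^i, i.e.            *)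
(* sigma_i(z^j) = R^{ji} z^j.                                           *)

Section Bimodules.
Variables (A : nzRingType) (sigma : 'I_4 -> A -> A).

(* omega = sum_i omega i dz^i *)
Definition Om1 := 'I_4 -> A.
(* t = sum_{i,j} t i j dz^i (x)_A dz^j *)
Definition Om2 := 'I_4 -> 'I_4 -> A.

Definition dz (k : 'I_4) : Om1 := fun i => if i == k then 1 else 0.

Definition add1 (u v : Om1) : Om1 := fun i => u i + v i.
Definition lact1 (a : A) (u : Om1) : Om1 := fun i => a * u i.
Definition ract1 (u : Om1) (b : A) : Om1 := fun i => u i * sigma i b.
Definition sum1 n (F : 'I_n -> Om1) : Om1 := fun i => \sum_(k < n) F k i.

Definition add2 (u v : Om2) : Om2 := fun i j => u i j + v i j.
Definition lact2 (a : A) (t : Om2) : Om2 := fun i j => a * t i j.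
(* (dz^i (x) dz^j) b = sigma_i(sigma_j b) dz^i (x) dz^j *)
Definition ract2 (t : Om2) (b : A) : Om2 :=
  fun i j => t i j * sigma i (sigma j b).
Definition sum2 n (F : 'I_n -> Om2) : Om2 := fun i j => \sum_(k < n) F k i j.

(* omega (x)_A eta = sum_{i,j} omega_i sigma_i(eta_j) dz^i (x) dz^j *)
Definition tens (u v : Om1) : Om2 := fun i j => u i * sigma i (v j).

Definition bimod_map_to2 (g : A -> Om2) : Prop :=
  (forall x y, g (x + y) = add2 (g x) (g y)) /\
  (forall a x b, g (a * x * b) = ract2 (lact2 a (g x)) b).

Definition bimod_map_from2 (h : Om2 -> A) : Prop :=
  (forall s t, h (add2 s t) = h s + h t) /\
  (forall a t b, h (ract2 (lact2 a t) b) = a * h t * b).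

Definition gen_metric_with_inverse (g : A -> Om2) (ginv : Om2 -> A) : Prop :=
  [/\ bimod_map_to2 g, bimod_map_from2 ginv &
    exists n (gU gD : 'I_n -> Om1),
      [/\ g 1 = sum2 (fun a => tens (gU a) (gD a)),
          forall w : Om1, sum1 (fun a => lact1 (ginv (tens w (gU a))) (gD a)) = w
        & forall w : Om1, sum1 (fun a => ract1 (gU a) (ginv (tens (gD a) w))) = w]].

End Bimodules.

Definition theta_right_action (R : realType) (theta : R) (A : algType R[i])
  (z : 'I_4 -> A) (sigma : 'I_4 -> A -> A) : Prop :=
  forall i, is_alg_hom (sigma i) /\
            forall j, sigma i (z j) = Rmat theta j i *: z j.

Definition gel (R : realType) (A : algType R[i]) : Om2 A :=
  fun i j => (glow R i j)%:A.

Definition ginv (R : realType) (A : algType R[i]) (t : Om2 A) : A :=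
  \sum_(i < 4) \sum_(j < 4) t i j * (gup R i j)%:A.

(* Main.v *)
Require Import Defs.
From HB Require Import structures.
From mathcomp Require Import all_boot all_order all_algebra.
From mathcomp Require Import reals trigo.
From mathcomp Require Import complex.
From Stdlib Require Import FunctionalExtensionality.
Import GRing.Theory Num.Theory.
Local Open Scope ring_scope.

Definition pair4 (i : 'I_4) : 'I_4 := inZp (i + 2).

Lemma pair4K i : pair4 (pair4 i) = i.
Proof. by apply/val_inj; case: i => [[|[|[|[|?]]]] ?]. Qed.

Lemma Pmat_E (K : nzRingType) i j : Pmat K i j = (j == pair4 i)%:R.
Proof. by rewrite mxE; case: i => [[|[|[|[|?]]]] ?] //; case: j => [[|[|[|[|?]]]] ?]. Qed.

Lemma ef (R : realType) (t : R) : eith t * emith t = 1.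
Proof.
rewrite /eith /emith; apply/eqP; rewrite eq_complex /= mulrN opprK -!expr2 cos2Dsin2 eqxx /=.
by rewrite [sin t * _]mulrC mulrN addNr.
Qed.

Lemma Rprod (R : realType) (t : R) i k : Rmat t k (pair4 i) * Rmat t k i = 1.
Proof.
have fe : emith t * eith t = 1 by rewrite mulrC ef.
rewrite !mxE; case: i => [[|[|[|[|?]]]] ?] //; case: k => [[|[|[|[|?]]]] ?] //=;
  by rewrite ?mul1r ?ef ?fe.
Qed.

Lemma two_nz (R : realType) : (2 : R[i]) != 0.
Proof. by rewrite eq_complex /= negb_and -[1 + 1]/(2%:R : R) pnatr_eq0. Qed.

Section S.
Variables (R : realType) (theta : R) (A : algType R[i]) (z : 'I_4 -> A)
  (sigma : 'I_4 -> A -> A).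
Hypothesis gen : generated_by z.
Hypothesis hs : theta_right_action theta z sigma.

Lemma sigD i a b : sigma i (a + b) = sigma i a + sigma i b.
Proof. by case: (hs i) => [[]]. Qed.
Lemma sigM i a b : sigma i (a * b) = sigma i a * sigma i b.
Proof. by case: (hs i) => [[]]. Qed.
Lemma sigA i (c : R[i]) : sigma i c%:A = c%:A.
Proof. by case: (hs i) => [[_ hZ _ h1] _]; rewrite hZ h1. Qed.
Lemma sig0 i : sigma i 0 = 0.
Proof. by have := sigA i 0; rewrite !scale0r. Qed.
Lemma sig1 i : sigma i 1 = 1.
Proof. by case: (hs i) => [[]]. Qed.

Lemma invol i a : sigma i (sigma (pair4 i) a) = a.
Proof.
apply: (gen (fun a => sigma i (sigma (pair4 i) a) = a)) => [k|c|x y hx hy|x y hx hy].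
- case: (hs (pair4 i)) => [[_ hZ _ _] ->]; case: (hs i) => [[_ hZ' _ _] hz].
  by rewrite hZ' hz scalerA Rprod scale1r.
- by rewrite !sigA.
- by rewrite !sigD hx hy.
- by rewrite !sigM hx hy.
Qed.

Lemma invol2 i j a : j = pair4 i -> sigma i (sigma j a) = a.
Proof. by move->; apply: invol. Qed.

Lemma comm_ind (c : R[i]) i j b :
  sigma i (sigma j b) * (c * (j == pair4 i)%:R)%:A = b * (c * (j == pair4 i)%:R)%:A.
Proof.
case: eqP => [->|_]; first by rewrite invol.
by rewrite mulr0 scale0r !mulr0.
Qed.

Lemma glowE i j : glow R i j = 2^-1 * (j == pair4 i)%:R.
Proof. by rewrite mxE Pmat_E. Qed.
Lemma gupE i j : gup R i j = 2 * (j == pair4 i)%:R.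
Proof. by rewrite mxE Pmat_E. Qed.

Lemma collapse (F : 'I_4 -> A) j0 :
  (forall j, j != j0 -> F j = 0) -> \sum_(j < 4) F j = F j0.
Proof.
move=> h; rewrite (bigD1 j0) //= big1 ?addr0 // => j /h //.
Qed.


Lemma centE i j b : @gel R A i j * sigma i (sigma j b) = b * @gel R A i j.
Proof. by rewrite /gel glowE mulr_algl -mulr_algr comm_ind. Qed.

Lemma ginv_simpl (t : Om2 A) : @ginv R A t = \sum_(i < 4) t i (pair4 i) * 2%:A.
Proof.
apply: eq_bigr => i _; rewrite (collapse _ (pair4 i)) ?gupE ?eqxx ?mulr1 // => j /negbTE h.
by rewrite gupE h mulr0 scale0r mulr0.
Qed.

End S.

Arguments centE {R theta A z sigma}.
Arguments comm_ind {R theta A z sigma}.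
Arguments sigA {R theta A z sigma}.
Arguments sig0 {R theta A z sigma}.
Arguments sig1 {R theta A z sigma}.
Arguments sigM {R theta A z sigma}.
Arguments invol {R theta A z sigma}.
Arguments collapse {R A}.
Arguments glowE {R}.
Arguments gupE {R}.
Arguments ginv_simpl {R A}.
Theorem lemma4p2 (R : realType) (theta : R) (A : algType R[i])
  (z : 'I_4 -> A) (sigma : 'I_4 -> A -> A) :
  presented_Rtheta theta z ->
  theta_right_action theta z sigma ->
  (forall a : A, lact2 a (@gel R A) = ract2 sigma (@gel R A) a) /\
  gen_metric_with_inverse sigma (fun a : A => lact2 a (@gel R A)) (@ginv R A).
Proof.
move=> [_ gen _] hs.
split.
  move=> a; apply: functional_extensionality => i; apply: functional_extensionality => j.
  by rewrite /lact2 /ract2 (centE gen hs).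
split.
- split.
  + move=> x y; apply: functional_extensionality => i; apply: functional_extensionality => j.
    by rewrite /lact2 /add2 mulrDl.
  + move=> a x b; apply: functional_extensionality => i; apply: functional_extensionality => j.
    by rewrite /lact2 /ract2 -!mulrA (centE gen hs).
- split.
  + move=> s t; rewrite /ginv /add2 -big_split; apply: eq_bigr => i _.
    rewrite -big_split; apply: eq_bigr => j _; by rewrite mulrDl.
  + move=> a t b; rewrite /ginv /ract2 /lact2 mulr_sumr mulr_suml; apply: eq_bigr => i _.
    rewrite mulr_sumr mulr_suml; apply: eq_bigr => j _.
    rewrite gupE -!mulrA (comm_ind gen hs).
    by rewrite mulr_algr mulr_algl.
- exists 4%N, (fun a => dz A a), (fun a j => (glow R a j)%:A). split.
  + apply: functional_extensionality => i; apply: functional_extensionality => j.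
    rewrite /lact2 /gel mul1r /sum2 /tens (collapse _ i) => [|a ha].
      by rewrite /dz eqxx mul1r (sigA hs).
    by rewrite /dz eq_sym (negbTE ha) mul0r.
  + move=> w; apply: functional_extensionality => k.
    rewrite /sum1 /lact1.
    under eq_bigr => a _ do rewrite ginv_simpl mulr_suml.
    rewrite exchange_big /=.
    rewrite (eq_bigr (fun i => w i * ((k == i)%:R)%:A)) => [|i _].
      rewrite (collapse _ k) => [|i ik]; first by rewrite eqxx scale1r mulr1.
      by rewrite eq_sym (negbTE ik) scale0r mulr0.
    rewrite (collapse _ (pair4 i)) => [|a ha].
      rewrite /tens /dz eqxx (sig1 hs) mulr1 glowE pair4K -mulrA mulr_algl mulr_algr.
      by rewrite scalerA mulrA mulfV ?two_nz // mul1r mulr_algr.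
    by rewrite /tens /dz eq_sym (negbTE ha) (sig0 hs) mulr0 !mul0r.
  + move=> w; apply: functional_extensionality => k.
    rewrite /sum1 /ract1 (collapse _ k) => [|a ha]; last first.
      by rewrite /dz eq_sym (negbTE ha) mul0r.
    rewrite /dz eqxx mul1r ginv_simpl (collapse _ (pair4 k)) => [|i hi]; last first.
      by rewrite /tens glowE (negbTE hi) mulr0 scale0r !mul0r.
    rewrite /tens pair4K glowE eqxx mulr1 !(sigM hs) !(sigA hs) (invol gen hs).
    by rewrite mulr_algl mulr_algr scalerA mulfV ?two_nz ?scale1r.
Qed.
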